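(* Let $\Gamma$ be a cocompact torsion-free Fuchsian group, $M=\mathbb{D}^2/\Gamma$, and identify $T_pM$ ($p=\pi(0)$) with $\mathbb{D}^2$ as described in the context. Then for every $i\ge1$, $$\sigma_i=\{z\in\mathbb{D}^2 : \upsilon(z)=i-1\},\qquad \mathbb{D}^2=\sigma_1\cup\mathcal{L},$$ and for every $z\in\mathbb{D}^2$, $$\iota(z)=\#\{\lambda\in\Lambda : \lambda\in D(z,r(z))\},$$ where $D(z,r(z))$ is the open hyperbolic disk of center $z$ and radius $r(z)$.
   Context: $\mathbb{D}^2$ is the open unit disk with the Poincaré metric $d$; $r(z)=d(0,z)$. $\pi:\mathbb{D}^2\to M$ is the quotient map and $\Lambda=\{\gamma(0):\gamma\in\Gamma\}$. For $\lambda\in\Lambda\setminus\{0\}$, $L_\lambda=\{z\in\mathbb{D}^2 : d(z,0)=d(z,\lambda)\}$ (the perpendicular bisector geodesic of $0$ and $\lambda$), and the web of geodesics is $\mathcal{L}=\bigcup_{\lambda\in\Lambda\setminus\{0\}}L_\lambda$. For $z\in\mathbb{D}^2$, $\rho(z)$ is the open geodesic segment from $0$ to $z$, $\iota(z)=\#\{\lambda\in\Lambda\setminus\{0\} : L_\lambda\cap\rho(z)\neq\emptyset\}$ and $\upsilon(z)=\#\{\lambda\in\Lambda\setminus\{0\}: z\in L_\lambda\}$. The exponential map $\exp_p:T_pM\to M$ is a covering isomorphic to $\pi$; we identify $T_pM$ with $\mathbb{D}^2$ so that $v\in T_pM$ corresponds to $z\in\mathbb{D}^2$ with $d(0,z)=|v|$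 and $\exp_p(v)=\pi(z)$ (via the hyperbolic exponential map at $0$). Under this identification the focal index of $z$ is $I(z)=\#\{z'\in\mathbb{D}^2 : \pi(z')=\pi(z),\ d(0,z')=d(0,z)\}$, and $\sigma_i=\{z : I(z)=i\}$ (the focal decomposition of $T_pM$). *)

(* Defs.v *)
From HB Require Import structures.
From mathcomp Require Import all_boot all_order all_algebra.
From mathcomp Require Import complex.
From mathcomp Require Import boolp classical_sets cardinality reals exp.
Set Implicit Arguments. Unset Strict Implicit. Unset Printing Implicit Defensive.
Import Order.TTheory GRing.Theory Num.Theory.
Local Open Scope ring_scope.
Local Open Scope complex_scope.
Local Open Scope classical_set_scope.

Section Hyp.
Variable R : realType.
Local Notation C := (R[i]).
Local Notation normc := (@ComplexField.Normc.normc R).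

Definition inD (z : C) : Prop := normc z < 1.

(* Poincare distance on the disk (curvature -1):
   d(z,w) = log((1+t)/(1-t)),  t = |z-w| / |1 - conj(w) z| *)
Definition hdist (z w : C) : R :=
  let t := normc (z - w) / normc (1 - w^* * z) in ln ((1 + t) / (1 - t)).

(* SU(1,1): pairs (a,b) standing for the matrix [[a,b],[conj b, conj a]]
   with |a|^2 - |b|^2 = 1; it acts on the disk by Mobius maps. *)
Definition su11 (g : C * C) : Prop := normc g.1 ^+ 2 - normc g.2 ^+ 2 = 1.
Definition mob (g : C * C) (z : C) : C := (g.1 * z + g.2) / (g.2^* * z + g.1^*).
Definition gmul (g h : C * C) : C * C :=
  (g.1 * h.1 + g.2 * h.2^*, g.1 * h.2 + g.2 * h.1^*).
Definition ginv (g : C * C) : C * C := (g.1^*, - g.2).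
Definition gone : C * C := (1, 0).
Definition gmone : C * C := (-1, 0).
Definition gpow (g : C * C) (n : nat) : C * C := iter n (gmul g) gone.

(* A Fuchsian group, given by its full preimage Gam in SU(1,1)
   (so it contains -I), a discrete subgroup of SU(1,1). *)
Definition fuchsian (Gam : set (C * C)) : Prop :=
  (forall g, Gam g -> su11 g) /\
      Gam gone /\ Gam gmone /\
      (forall g h, Gam g -> Gam h -> Gam (gmul g h)) /\
      (forall g, Gam g -> Gam (ginv g)) /\
      (exists2 eps : R, 0 < eps & forall g, Gam g ->
        normc (g.1 - 1) < eps -> normc g.2 < eps -> g = gone).

(* torsion-free: no nontrivial element of finite order in PSU(1,1) *)
Definition torsion_free (Gam : set (C * C)) : Prop :=
  forall g n, Gam g -> (0 < n)%N ->
    (gpow g n = gone \/ gpow g n = gmone) -> g = gone \/ g = gmone.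

(* cocompact: the Gam-translates of some compact set (w.l.o.g. a closed
   hyperbolic disk about 0) cover the disk *)
Definition cocompact (Gam : set (C * C)) : Prop :=
  exists Rad : R, forall z, inD z -> exists2 g, Gam g & hdist 0 (mob g z) <= Rad.

Definition Lambda (Gam : set (C * C)) : set C := [set mob g 0 | g in Gam].

Definition Lbis (lam : C) : set C := [set z | inD z /\ hdist z 0 = hdist z lam].

(* open geodesic segment from 0 to z (a piece of a diameter) *)
Definition rho (z : C) : set C := [set w | exists t : R, 0 < t < 1 /\ w = t%:C * z].

(* sets whose cardinalities are iota(z), upsilon(z), I(z) *)
Definition iota_set (Gam : set (C * C)) (z : C) : set C :=
  [set lam | Lambda Gam lam /\ lam <> 0 /\ (rho z `&` Lbis lam) !=set0].
Definition upsilon_set (Gam : set (C * C)) (z : C) : set C :=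
  [set lam | Lambda Gam lam /\ lam <> 0 /\ Lbis lam z].
Definition focal_set (Gam : set (C * C)) (z : C) : set C :=
  [set z' | inD z' /\ (exists2 g, Gam g & mob g z = z') /\ hdist 0 z' = hdist 0 z].

Definition web (Gam : set (C * C)) : set C :=
  [set z | exists lam, Lambda Gam lam /\ lam <> 0 /\ Lbis lam z].

Definition sigma (Gam : set (C * C)) (i : nat) : set C :=
  [set z | inD z /\ card_eq (focal_set Gam z) `I_i].

End Hyp.

(* Main.v *)
Require Import Defs.
From HB Require Import structures.
From mathcomp Require Import all_boot all_order all_algebra.
From mathcomp Require Import complex.
From mathcomp Require Import boolp classical_sets cardinality reals exp.
From mathcomp Require Import ring lra.
Import Order.TTheory GRing.Theory Num.Theory.
Local Open Scope ring_scope.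
Local Open Scope classical_set_scope.

Module H.

Local Open Scope ring_scope.
Local Open Scope complex_scope.
Local Open Scope classical_set_scope.
Set Implicit Arguments. Unset Strict Implicit. Unset Printing Implicit Defensive.

Section S.
Variable R : realType.
Local Notation C := (R[i]).
Local Notation normc := (@ComplexField.Normc.normc R).
Implicit Types (z w x y u v : C) (g h : C * C).

Definition n2 (x : C) : R := (@complex.Re R x) ^+ 2 + (@complex.Im R x) ^+ 2.
Definition cj (x : C) : C := conjc x.

Lemma normc_n2 x : normc x = Num.sqrt (n2 x).
Proof. by case: x. Qed.

Lemma n2_ge0 x : 0 <= n2 x.
Proof. rewrite /n2; nra. Qed.

Lemma normc_ge0 x : 0 <= normc x.
Proof. by rewrite normc_n2 sqrtr_ge0. Qed.

Lemma normc_sqr x : normc x ^+ 2 = n2 x.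
Proof. by rewrite normc_n2 sqr_sqrtr ?n2_ge0. Qed.

Lemma n2M x y : n2 (x * y) = n2 x * n2 y.
Proof. case: x => a b; case: y => c d; rewrite /n2 /=; ring. Qed.

Lemma n2J x : n2 (cj x) = n2 x.
Proof. case: x => a b; rewrite /n2 /=; ring. Qed.

Lemma n2N x : n2 (- x) = n2 x.
Proof. case: x => a b; rewrite /n2 /=; ring. Qed.

Lemma n2_1 : n2 1 = 1.
Proof. rewrite /n2 /=; ring. Qed.

Lemma n2_0 : n2 0 = 0.
Proof. rewrite /n2 /=; ring. Qed.

Lemma n2_eq0 x : n2 x = 0 -> x = 0.
Proof.
case: x => a b; rewrite /n2 /= => h.
have ha : a = 0 by nra. have hb : b = 0 by nra.
by rewrite ha hb.
Qed.

Lemma n2_gt0 x : x != 0 -> 0 < n2 x.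
Proof.
move=> hx; rewrite lt_neqAle n2_ge0 andbT; apply/eqP => h.
by move/eqP: hx; apply; apply: n2_eq0.
Qed.

Lemma n2_neq0 x : 0 < n2 x -> x != 0.
Proof. by move=> h; apply/eqP => hx; move: h; rewrite hx n2_0 ltxx. Qed.

Lemma n2V x : n2 (x^-1) = (n2 x)^-1.
Proof.
have [->|hx] := eqVneq x 0; first by rewrite invr0 n2_0 invr0.
have h : n2 x * n2 x^-1 = 1 by rewrite -n2M mulfV // n2_1.
have hp := n2_gt0 hx.
by rewrite -[LHS]mul1r -(mulVf (lt0r_neq0 hp)) -mulrA h mulr1.
Qed.

Lemma n2_div x y : n2 (x / y) = n2 x / n2 y.
Proof. by rewrite n2M n2V. Qed.

Lemma inDE z : inD z <-> n2 z < 1.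
Proof.
rewrite /inD normc_n2; split => h.
  by rewrite -(ltr_sqrt _ ltr01) sqrtr1.
by rewrite -sqrtr1 ltr_sqrt.
Qed.

Lemma key1 (z w : C) : n2 (1 - cj w * z) = n2 (z - w) + (1 - n2 z) * (1 - n2 w).
Proof. case: z => a b; case: w => c d; rewrite /n2 /=. ring. Qed.

Definition tau (z w : C) : R := n2 (z - w) / n2 (1 - cj w * z).
Definition tv (z w : C) : R := normc (z - w) / normc (1 - cj w * z).

Lemma den_gt0 z w : inD z -> inD w -> 0 < n2 (1 - cj w * z).
Proof.
move=> /inDE hz /inDE hw; rewrite key1; have := n2_ge0 (z - w); nra.
Qed.

Lemma tau_lt1 z w : inD z -> inD w -> 0 <= tau z w < 1.
Proof.
move=> hz hw; have hd := den_gt0 hz hw.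
move: (hz) (hw) => /inDE hz' /inDE hw'.
have k := key1 z w; have h0 := n2_ge0 (z - w).
rewrite /tau divr_ge0 ?n2_ge0 //= ltr_pdivrMr // mul1r; nra.
Qed.

Lemma tauE z w : tau z w = n2 (z - w) / (n2 (z - w) + (1 - n2 z) * (1 - n2 w)).
Proof. by rewrite /tau key1. Qed.

Lemma tv_ge0 z w : 0 <= tv z w.
Proof. by rewrite /tv divr_ge0 ?normc_ge0. Qed.

Lemma tv_sqr z w : tv z w ^+ 2 = tau z w.
Proof. by rewrite /tv expr_div_n !normc_sqr. Qed.

Definition hf (t : R) : R := ln ((1 + t) / (1 - t)).

Lemma hdistE (z w : C) : hdist z w = hf (tv z w).
Proof. by []. Qed.

Lemma hf_le s t : 0 <= s < 1 -> 0 <= t < 1 -> (hf s <= hf t) = (s <= t).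
Proof.
move=> /andP[s0 s1] /andP[t0 t1]; rewrite /hf ler_ln; last first.
- by rewrite posrE divr_gt0 // ?subr_gt0 //; lra.
- by rewrite posrE divr_gt0 // ?subr_gt0 //; lra.
rewrite ler_pdivrMr ?subr_gt0 // mulrAC ler_pdivlMr ?subr_gt0 //.
apply/idP/idP => h; nra.
Qed.

Lemma tv_lt1 z w : inD z -> inD w -> 0 <= tv z w < 1.
Proof.
move=> hz hw; have /andP[_ h] := tau_lt1 hz hw.
rewrite tv_ge0 /=; rewrite -tv_sqr in h; have := tv_ge0 z w; nra.
Qed.

Lemma hdist_le (z w z' w' : C) : inD z -> inD w -> inD z' -> inD w' ->
  (hdist z w <= hdist z' w') = (tau z w <= tau z' w').
Proof.
move=> hz hw hz' hw'; rewrite !hdistE hf_le ?tv_lt1 // -!tv_sqr.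
have := tv_ge0 z w; have := tv_ge0 z' w'.
move=> a b; apply/idP/idP => h; nra.
Qed.

Lemma hdist_lt (z w z' w' : C) : inD z -> inD w -> inD z' -> inD w' ->
  (hdist z w < hdist z' w') = (tau z w < tau z' w').
Proof.
by move=> hz hw hz' hw'; rewrite !ltNge hdist_le.
Qed.

Lemma hdist_eq (z w z' w' : C) : inD z -> inD w -> inD z' -> inD w' ->
  (hdist z w = hdist z' w') <-> (tau z w = tau z' w').
Proof.
move=> hz hw hz' hw'; split => h.
  by apply/le_anti; rewrite -!hdist_le // h lexx.
by apply/le_anti; rewrite !hdist_le // h lexx.
Qed.

Lemma hdist_sym (z w : C) : hdist z w = hdist w z.
Proof.
rewrite !hdistE /tv; congr hf; congr (_ / _).
  by rewrite -normcN opprB.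
rewrite !normc_n2; congr Num.sqrt.
case: z => a b; case: w => c d; rewrite /n2 /=; ring.
Qed.

Lemma cj0 : cj 0 = 0.
Proof. by apply/eqP; rewrite eq_complex /=; apply/andP; split; apply/eqP; ring. Qed.

Lemma tau0 z : tau z 0 = n2 z.
Proof. rewrite /tau subr0 cj0. by rewrite mul0r subr0 n2_1 divr1. Qed.

Lemma inD0 : inD (0 : C).
Proof. by apply/inDE; rewrite n2_0 ltr01. Qed.

Definition Ng (g : C * C) z := g.1 * z + g.2.
Definition Dg (g : C * C) z := cj g.2 * z + cj g.1.

Lemma mobE g z : mob g z = Ng g z / Dg g z.
Proof. by []. Qed.

Lemma su11E g : su11 g <-> n2 g.1 - n2 g.2 = 1.
Proof. by rewrite /su11 !normc_sqr. Qed.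

Lemma Kc g : su11 g -> g.1 * cj g.1 - g.2 * cj g.2 = 1.
Proof.
move/su11E; case: g => [[a b] [c d]]; rewrite /n2 /= => h.
apply/eqP; rewrite eq_complex /=; apply/andP; split; apply/eqP; [ | ring].
rewrite -h; ring.
Qed.

Lemma nDN g z : su11 g -> n2 (Dg g z) - n2 (Ng g z) = 1 - n2 z.
Proof.
move/su11E => h.
have -> : n2 (Dg g z) - n2 (Ng g z) = (n2 g.1 - n2 g.2) * (1 - n2 z).
  by case: g {h} => [[a b] [c d]]; case: z => x y; rewrite /n2 /=; ring.
by rewrite h mul1r.
Qed.

Lemma Dg_gt0 g z : su11 g -> inD z -> 0 < n2 (Dg g z).
Proof. move=> hg /inDE hz; have := nDN z hg; have := n2_ge0 (Ng g z); lra. Qed.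

Lemma Dg_neq0 g z : su11 g -> inD z -> Dg g z != 0.
Proof. by move=> hg hz; apply: n2_neq0; apply: Dg_gt0. Qed.

Lemma n2mob g z : n2 (mob g z) = n2 (Ng g z) / n2 (Dg g z).
Proof. by rewrite mobE n2_div. Qed.

Lemma one_sub_mob g z : su11 g -> inD z -> 1 - n2 (mob g z) = (1 - n2 z) / n2 (Dg g z).
Proof.
move=> hg hz; have hd := Dg_gt0 hg hz; rewrite n2mob -(nDN z hg).
by field; apply: lt0r_neq0.
Qed.

Lemma mob_inD g z : su11 g -> inD z -> inD (mob g z).
Proof.
move=> hg hz; apply/inDE; have := one_sub_mob hg hz.
move: (hz) => /inDE hz'; have hd := Dg_gt0 hg hz.
have : 0 < (1 - n2 z) / n2 (Dg g z) by apply: divr_gt0; lra.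
lra.
Qed.

Lemma mob_sub g z w : su11 g -> inD z -> inD w ->
  mob g z - mob g w = (z - w) / (Dg g z * Dg g w).
Proof.
move=> hg hz hw; have h1 := Dg_neq0 hg hz; have h2 := Dg_neq0 hg hw.
rewrite !mobE.
have -> : Ng g z / Dg g z - Ng g w / Dg g w =
   (Ng g z * Dg g w - Ng g w * Dg g z) / (Dg g z * Dg g w) by field; apply/andP.
congr (_ / _).
have -> : Ng g z * Dg g w - Ng g w * Dg g z = (g.1 * cj g.1 - g.2 * cj g.2) * (z - w).
  by rewrite /Ng /Dg; ring.
by rewrite Kc // mul1r.
Qed.

Lemma tau_mob g z w : su11 g -> inD z -> inD w -> tau (mob g z) (mob g w) = tau z w.
Proof.
move=> hg hz hw; rewrite !tauE mob_sub // n2_div n2M !one_sub_mob //.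
have hp := Dg_gt0 hg hz; have hq := Dg_gt0 hg hw.
move: (hz) (hw) => /inDE hz' /inDE hw'.
have ha := n2_ge0 (z - w).
have hs : n2 (z - w) + (1 - n2 z) * (1 - n2 w) != 0.
  by apply: lt0r_neq0; nra.
field; rewrite hs /=; apply/andP; split; apply: lt0r_neq0 => //.
Qed.

Lemma hdist_mob (g : C * C) (z w : C) : su11 g -> inD z -> inD w -> hdist (mob g z) (mob g w) = hdist z w.
Proof.
move=> hg hz hw; apply/hdist_eq; rewrite ?tau_mob //; exact: mob_inD.
Qed.

End S.

Local Open Scope ring_scope.
Local Open Scope complex_scope.
Local Open Scope classical_set_scope.
Set Implicit Arguments. Unset Strict Implicit. Unset Printing Implicit Defensive.

Section S2.
Variable R : realType.
Local Notation C := (R[i]).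
Local Notation normc := (@ComplexField.Normc.normc R).
Implicit Types (z w x y u v : C) (g h k : C * C).

Lemma ceq (a b c d : R) : a = c -> b = d -> a +i* b = c +i* d.
Proof. by move=> -> ->. Qed.

Lemma gmulA g h k : gmul g (gmul h k) = gmul (gmul g h) k.
Proof.
case: g => [[a1 a2] [b1 b2]]; case: h => [[c1 c2] [d1 d2]]; case: k => [[e1 e2] [f1 f2]].
rewrite /gmul /=; congr pair; apply: ceq; ring.
Qed.

Lemma gmul1g g : gmul (gone R) g = g.
Proof.
case: g => [[a1 a2] [b1 b2]]; rewrite /gmul /gone /=; congr pair; apply: ceq; ring.
Qed.

Lemma gmulg1 g : gmul g (gone R) = g.
Proof.
case: g => [[a1 a2] [b1 b2]]; rewrite /gmul /gone /=; congr pair; apply: ceq; ring.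
Qed.

Lemma gmulVg g : su11 g -> gmul (ginv g) g = gone R.
Proof.
move/su11E; case: g => [[a1 a2] [b1 b2]]; rewrite /gmul /gone /ginv /n2 /= => hs.
congr pair; apply: ceq; rewrite -?hs; ring.
Qed.

Lemma gmulgV g : su11 g -> gmul g (ginv g) = gone R.
Proof.
move/su11E; case: g => [[a1 a2] [b1 b2]]; rewrite /gmul /gone /ginv /n2 /= => hs.
congr pair; apply: ceq; rewrite -?hs; ring.
Qed.

Lemma ginvK g : ginv (ginv g) = g.
Proof.
case: g => [[a1 a2] [b1 b2]]; rewrite /ginv /=; congr pair; apply: ceq; ring.
Qed.

Lemma ginv1 : ginv (gone R) = gone R.
Proof. rewrite /ginv /gone /=; congr pair; apply: ceq; ring. Qed.

Lemma ginvm1 : ginv (gmone R) = gmone R.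
Proof. rewrite /ginv /gmone /=; congr pair; apply: ceq; ring. Qed.

Lemma su11_ginv g : su11 g -> su11 (ginv g).
Proof.
rewrite !su11E; case: g => [[a1 a2] [b1 b2]]; rewrite /ginv /n2 /=.
move=> h; rewrite -h; ring.
Qed.

Lemma mob1 z : mob (gone R) z = z.
Proof.
rewrite mobE /Ng /Dg /gone /=.
have -> : cj 0 * z + cj 1 = 1.
  by case: z => a b; apply: ceq; ring.
by rewrite divr1 mul1r addr0.
Qed.

Lemma mobm1 z : mob (gmone R) z = z.
Proof.
rewrite mobE /Ng /Dg /gmone /=.
have -> : cj 0 * z + cj (-1) = -1.
  by case: z => a b; apply: ceq; ring.
by rewrite addr0 invrN invr1 mulrN1 mulN1r opprK.
Qed.

Lemma mob_comp g h z : su11 g -> su11 h -> inD z ->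
  mob (gmul g h) z = mob g (mob h z).
Proof.
move=> hg hh hz.
have hu := mob_inD hh hz.
have d1 := Dg_neq0 hh hz; have d2 := Dg_neq0 hg hu.
move: d2; rewrite !mobE.
set u := Ng h z / Dg h z => d2.
have e1 : Ng (gmul g h) z = g.1 * Ng h z + g.2 * Dg h z.
  case: g {hg d2 u} => [[a1 a2] [b1 b2]]; case: h {hh d1 hu} => [[c1 c2] [d1 d2]].
  case: z {hz} => x y; rewrite /Ng /Dg /gmul /cj /=; apply: ceq; ring.
have e2 : Dg (gmul g h) z = cj g.2 * Ng h z + cj g.1 * Dg h z.
  clear e1; case: g {hg d2 u} => [[a1 a2] [b1 b2]]; case: h {hh d1 hu} => [[c1 c2] [d1 d2]].
  case: z {hz} => x y; rewrite /Ng /Dg /gmul /cj /=; apply: ceq; ring.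
have e3 : cj g.2 * Ng h z + cj g.1 * Dg h z = Dg g u * Dg h z.
  by rewrite /u /Dg; rewrite /Dg in d1; field.
have d3 : cj g.2 * Ng h z + cj g.1 * Dg h z != 0 by rewrite e3 mulf_neq0.
rewrite e1 e2 /u; move: d3 d2 d1; rewrite /Ng /Dg => d3 d2 d1.
field; apply/andP; split; [exact: d1 | exact: d3].
Qed.

Lemma mob_ginvK g z : su11 g -> inD z -> mob (ginv g) (mob g z) = z.
Proof.
move=> hg hz; by rewrite -(mob_comp (su11_ginv hg) hg hz) gmulVg // mob1.
Qed.

Lemma mob_Kginv g z : su11 g -> inD z -> mob g (mob (ginv g) z) = z.
Proof.
move=> hg hz; by rewrite -(mob_comp hg (su11_ginv hg) hz) gmulgV // mob1.
Qed.

Lemma su11_gmul g h : su11 g -> su11 h -> su11 (gmul g h).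
Proof.
rewrite !su11E; case: g => [[a1 a2] [b1 b2]]; case: h => [[c1 c2] [d1 d2]].
rewrite /gmul /n2 /= => h1 h2.
apply: (@eq_trans _ _ ((a1 ^+ 2 + a2 ^+ 2 - (b1 ^+ 2 + b2 ^+ 2)) * (c1 ^+ 2 + c2 ^+ 2 - (d1 ^+ 2 + d2 ^+ 2)))); first ring.
by rewrite h1 h2 mul1r.
Qed.

End S2.

Local Open Scope ring_scope.
Local Open Scope complex_scope.
Local Open Scope classical_set_scope.
Set Implicit Arguments. Unset Strict Implicit. Unset Printing Implicit Defensive.

Section S3.
Variable R : realType.
Local Notation C := (R[i]).
Local Notation normc := (@ComplexField.Normc.normc R).
Implicit Types (z w x y u v lam : C) (g h k : C * C).

Definition Gf lam w : R := n2 w * n2 lam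
  - 2 * (complex.Re lam * complex.Re w + complex.Im lam * complex.Im w) + n2 lam.

Lemma tau_diff w lam : inD w -> inD lam ->
  tau w lam - tau w 0 = (1 - n2 w) * Gf lam w / n2 (1 - cj lam * w).
Proof.
move=> hw hl; have hd := den_gt0 hw hl.
rewrite tau0 /tau.
have hG : n2 (w - lam) = Gf lam w + n2 w * (1 - n2 lam).
  by case: w {hw hd} => a b; case: lam {hl} => c d; rewrite /Gf /n2 /=; ring.
have k := key1 w lam.
move: hd; rewrite k hG => hd.
field; exact: lt0r_neq0.
Qed.

Lemma hdist_eq0 w lam : inD w -> inD lam -> (hdist w 0 = hdist w lam <-> Gf lam w = 0).
Proof.
move=> hw hl; rewrite (hdist_eq hw (@inD0 R) hw hl).
have hd := den_gt0 hw hl; have := tau_diff hw hl; move: (hw) => /inDE hw'.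
move=> e; split => h.
  move: e; rewrite h subrr => /esym /eqP; rewrite !mulf_eq0 invr_eq0 => /orP[/orP[]|] /eqP.
  - lra.
  - done.
  - lra.
apply/eqP; rewrite eq_sym -subr_eq0 e h mulr0 mul0r //.
Qed.

Lemma hdist_lt0 z lam : inD z -> inD lam -> (hdist z lam < hdist 0 z <-> Gf lam z < 0).
Proof.
move=> hz hl; rewrite (hdist_sym 0 z) (hdist_lt hz hl hz (@inD0 R)).
have hd := den_gt0 hz hl; have := tau_diff hz hl; move: (hz) => /inDE hz'.
move=> e; rewrite -subr_lt0 e.
have hp : 0 < (1 - n2 z) / n2 (1 - cj lam * z) by apply: divr_gt0; lra.
have -> : (1 - n2 z) * Gf lam z / n2 (1 - cj lam * z) = Gf lam z * ((1 - n2 z) / n2 (1 - cj lam * z)) by ring.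
by rewrite pmulr_llt0.
Qed.

Lemma Gf_scale lam z (s : R) : Gf lam (s%:C * z) =
  s ^+ 2 * (n2 z * n2 lam) - 2 * s * (complex.Re lam * complex.Re z + complex.Im lam * complex.Im z) + n2 lam.
Proof. by case: z => a b; case: lam => c d; rewrite /Gf /n2 /=; ring. Qed.

Lemma n2_scale z (s : R) : n2 (s%:C * z) = s ^+ 2 * n2 z.
Proof. by case: z => a b; rewrite /n2 /=; ring. Qed.

Lemma part3_geo z lam : inD z -> inD lam ->
  ((lam <> 0 /\ (rho z `&` Lbis lam) !=set0) <-> hdist z lam < hdist 0 z).
Proof.
move=> hz hl; rewrite hdist_lt0 //.
have hn := n2_ge0 z; move: (hz) => /inDE hz'.
set n := n2 z; set L := n2 lam.
set p := (complex.Re lam * complex.Re z + complex.Im lam * complex.Im z).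
have GzE : Gf lam z = n * L - 2 * p + L by [].
have hn1 : 0 <= n := hn.
have hn2 : n < 1 := hz'.
have ndef : n = n2 z by []. have Ldef : L = n2 lam by [].
have pdef : p = complex.Re lam * complex.Re z + complex.Im lam * complex.Im z by [].
clearbody n L p; clear hn hz'.
split.
  move=> [hl0 [w [[s [/andP[s0 s1] ->]] [hw heq]]]].
  move/(hdist_eq0 hw hl): heq; rewrite Gf_scale -ndef -Ldef -pdef => e.
  have hL : 0 < L by rewrite Ldef; apply: n2_gt0; apply/eqP.
  have e2 : s * Gf lam z = L * (1 - s) * (s * n - 1) by rewrite GzE; nra.
  have h1 : 0 < L * (1 - s) by apply: mulr_gt0; lra.
  have h2 : 0 < 1 - s * n.
    have : 0 <= (1 - s) * n by apply: mulr_ge0; lra.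
    lra.
  have h3 := mulr_gt0 h1 h2.
  have h4 : s * Gf lam z < 0.
    rewrite e2; have -> : L * (1 - s) * (s * n - 1) = - (L * (1 - s) * (1 - s * n)) by ring.
    by rewrite oppr_lt0.
  nra.
move=> hG.
have hL0 : lam != 0.
  apply/eqP => hl0; move: hG; rewrite GzE pdef Ldef hl0 n2_0 /=; lra.
have hL : 0 < L by rewrite Ldef; apply: n2_gt0.
set a := n * L.
have hb : a + L < 2 * p by rewrite GzE -/a in hG; lra.
have ha : 0 <= a by apply: mulr_ge0; lra.
have hdisc : 0 <= p ^+ 2 - a * L.
  have h0 : 0 < a + L by lra.
  have h1 : (a + L) * (a + L) < (2 * p) * (2 * p) by apply: ltr_pM; lra.
  have h2 : 0 <= (a - L) ^+ 2 by apply: sqr_ge0.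
  nra.
set sq := Num.sqrt (p ^+ 2 - a * L).
have hsq : sq ^+ 2 = p ^+ 2 - a * L by rewrite sqr_sqrtr.
have hsq0 : 0 <= sq by apply: sqrtr_ge0.
have hbp : 0 < p + sq by nra.
set s := L / (p + sq).
have s0 : 0 < s by apply: divr_gt0.
have s1 : s < 1.
  rewrite ltr_pdivrMr // mul1r.
  have hx : 0 < L * (2 * p - a - L) by apply: mulr_gt0; lra.
  have h : (L - p) ^+ 2 < sq ^+ 2 by rewrite hsq; nra.
  have [hle|hlt] := lerP sq (L - p); last lra.
  have := ler_pM hsq0 hsq0 hle hle.
  rewrite -!expr2; lra.
have hq : s ^+ 2 * a - 2 * s * p + L = 0.
  have -> : s ^+ 2 * a - 2 * s * p + L = L * (L * a - p ^+ 2 + sq ^+ 2) / (p + sq) ^+ 2.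
    by rewrite /s; field; apply: lt0r_neq0.
  rewrite hsq; have -> : L * a - p ^+ 2 + (p ^+ 2 - a * L) = 0 by ring.
  by rewrite mulr0 mul0r.
have hw : inD (s%:C * z).
  apply/inDE; rewrite n2_scale -ndef; nra.
split; first by apply/eqP.
exists (s%:C * z); split.
  by exists s; rewrite s0 s1.
split => //; apply/(hdist_eq0 hw hl).
by rewrite Gf_scale -ndef -Ldef -pdef -/a.
Qed.

End S3.

Local Open Scope ring_scope.
Local Open Scope complex_scope.
Local Open Scope classical_set_scope.
Set Implicit Arguments. Unset Strict Implicit. Unset Printing Implicit Defensive.

Lemma pigeon (T : finType) (f : nat -> T) : exists i j, (i < j)%N /\ f i = f j.
Proof.
pose F := fun i : 'I_(#|T|.+1) => f i.
have : ~ injective F.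
  move=> hF; have := @leq_card _ _ F hF; rewrite card_ord ltnn //.
move=> hn.
have [[i [j [hij hne]]]|hno] := pselect (exists i j : 'I_(#|T|.+1), F i = F j /\ i <> j).
  have [hlt|hgt|heq] := ltngtP i j.
  - by exists i, j.
  - by exists j, i.
  - by exfalso; apply: hne; apply: val_inj.
exfalso; apply: hn => i j hij; apply: contrapT => hne; apply: hno; by exists i, j.
Qed.

Section S4.
Variable R : realType.
Local Notation C := (R[i]).
Local Notation normc := (@ComplexField.Normc.normc R).
Implicit Types (z w x y u v lam : C) (g h k : C * C).

Lemma tau0l z : tau 0 z = n2 z.
Proof. rewrite /tau sub0r n2N mulr0 subr0 n2_1 divr1 //. Qed.

Lemma normcJ x : normc (cj x) = normc x.
Proof. by rewrite !normc_n2 n2J. Qed.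

Lemma normc_lb x : 1 - normc x <= normc (1 - x).
Proof.
have := le_normcD (1 - x) x.
rewrite subrK normc_n2 n2_1 sqrtr1; lra.
Qed.

Lemma normc_lt1 z : inD z -> normc z < 1.
Proof. by []. Qed.

Definition Bd z : R := ((1 - normc z) ^+ 2)^-1.

Lemma Bd_ge1 z : inD z -> 1 <= Bd z.
Proof.
move=> hz; have h1 := normc_lt1 hz; have h0 := normc_ge0 z.
have hd : 0 < (1 - normc z) ^+ 2 by apply: exprn_gt0; lra.
rewrite /Bd -div1r ler_pdivlMr // mul1r; nra.
Qed.

Lemma mob0 g : mob g 0 = g.2 / cj g.1.
Proof. by rewrite mobE /Ng /Dg !mulr0 !add0r. Qed.

Lemma stab_bound g z : su11 g -> inD z -> mob g z = z -> n2 g.1 <= Bd z.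
Proof.
move=> hg hz hfix.
have hw := mob_inD hg (@inD0 R).
set w := mob g 0 in hw.
have ht : tau w z = n2 z by rewrite -{1}hfix /w tau_mob ?tau0l //; exact: inD0.
have k := key1 w z.
move: (hz) (hw) => /inDE hz' /inDE hw'.
have hA := n2_ge0 (w - z).
have hden : n2 (1 - cj z * w) = 1 - n2 w.
  move: ht; rewrite tauE => ht.
  have hpos : 0 < n2 (w - z) + (1 - n2 w) * (1 - n2 z) by nra.
  have e : n2 (w - z) = n2 z * (n2 (w - z) + (1 - n2 w) * (1 - n2 z)).
    by have := congr1 (fun t => t * (n2 (w - z) + (1 - n2 w) * (1 - n2 z))) ht; rewrite /= divfK // lt0r_neq0.
  rewrite k; nra.
have hlow : (1 - normc z) ^+ 2 <= n2 (1 - cj z * w).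
  rewrite -normc_sqr.
  have h1 := normc_lb (cj z * w).
  have h2 : normc (cj z * w) <= normc z.
    rewrite ComplexField.Normc.normcM normcJ.
    have := normc_ge0 z; have := normc_ge0 w; have := normc_lt1 hw; nra.
  have h3 := normc_lt1 hz.
  have h4 := normc_ge0 (1 - cj z * w).
  nra.
have hm : n2 w = n2 g.2 / n2 g.1 by rewrite /w mob0 n2_div n2J.
move/su11E: hg => hs.
have hs1 : 0 < n2 g.1 by have := n2_ge0 g.2; lra.
have hd : 0 < (1 - normc z) ^+ 2 by apply: exprn_gt0; have := normc_lt1 hz; lra.
rewrite /Bd -div1r ler_pdivlMr // mulrC.
have e : 1 - n2 w = 1 / n2 g.1.
  rewrite hm; have -> : n2 g.2 = n2 g.1 - 1 by lra.
  by field; apply: lt0r_neq0.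
have : (1 - normc z) ^+ 2 <= 1 / n2 g.1 by rewrite -e -hden.
rewrite ler_pdivlMr //.
Qed.

End S4.

Local Open Scope ring_scope.
Local Open Scope complex_scope.
Local Open Scope classical_set_scope.
Set Implicit Arguments. Unset Strict Implicit. Unset Printing Implicit Defensive.

Section S5.
Variable R : realType.
Local Notation C := (R[i]).
Local Notation normc := (@ComplexField.Normc.normc R).
Implicit Types (z w x y u v lam : C) (g h k : C * C).

Lemma gpow0 g : gpow g 0 = gone R.
Proof. by []. Qed.

Lemma gpowS g n : gpow g n.+1 = gmul g (gpow g n).
Proof. by []. Qed.

Lemma gpow_add g i m : gpow g (i + m) = gmul (gpow g i) (gpow g m).
Proof.
elim: i => [|i IH]; first by rewrite add0n gpow0 gmul1g.
by rewrite addSn !gpowS IH gmulA.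
Qed.

Lemma gpow_Gam (Gam : set (C * C)) g n : fuchsian Gam -> Gam g -> Gam (gpow g n).
Proof.
move=> [_ [h1 [_ [hmul _]]]] hg; elim: n => [|n IH] //.
by rewrite gpowS; apply: hmul.
Qed.

Lemma gpow_fix (Gam : set (C * C)) g z n : fuchsian Gam -> Gam g -> inD z -> mob g z = z ->
  mob (gpow g n) z = z.
Proof.
move=> hF hg hz hfix; elim: n => [|n IH]; first by rewrite gpow0 mob1.
have [hsu _] := hF.
rewrite gpowS mob_comp ?IH //; [exact: hsu | apply: hsu; exact: gpow_Gam].
Qed.

Lemma gdiff1 (P Q : C * C) : su11 P ->
  (gmul (ginv P) Q).1 - 1 = cj P.1 * (Q.1 - P.1) - P.2 * cj (Q.2 - P.2).
Proof.
move/su11E; case: P => [[a1 a2] [b1 b2]]; case: Q => [[c1 c2] [d1 d2]].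
rewrite /gmul /ginv /n2 /cj /= => hs; apply: ceq; rewrite -?hs; ring.
Qed.

Lemma gdiff2 (P Q : C * C) : su11 P ->
  (gmul (ginv P) Q).2 = cj P.1 * (Q.2 - P.2) - P.2 * cj (Q.1 - P.1).
Proof.
move/su11E; case: P => [[a1 a2] [b1 b2]]; case: Q => [[c1 c2] [d1 d2]].
rewrite /gmul /ginv /n2 /cj /= => hs; apply: ceq; ring.
Qed.

Lemma n2B_le x y : n2 (x - y) <= 2 * (n2 x + n2 y).
Proof.
case: x => a b; case: y => c d; rewrite /n2 /=.
have := sqr_ge0 (a + c); have := sqr_ge0 (b + d); nra.
Qed.

Lemma n2_small x (hh : R) : `|complex.Re x| < hh -> `|complex.Im x| < hh -> n2 x < 2 * hh ^+ 2.
Proof.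
case: x => a b; rewrite /n2 /= !ltr_norml => /andP[h1 h2] /andP[h3 h4]; nra.
Qed.

Lemma normc_lt_eps x (e : R) : 0 < e -> n2 x < e ^+ 2 -> normc x < e.
Proof.
move=> he h; have e2 : Num.sqrt (e ^+ 2) = e by rewrite sqrtr_sqr ger0_norm // ltW.
by rewrite normc_n2 -[X in _ < X]e2 ltr_sqrt // exprn_gt0.
Qed.

Lemma cell_close (B : R) (K : nat) (c c' : R) : 0 < B -> (0 < K)%N ->
  -B <= c <= B -> -B <= c' <= B ->
  (inord (Num.truncn ((c + B) / (2 * B / K%:R))) : 'I_K.+1) =
   inord (Num.truncn ((c' + B) / (2 * B / K%:R))) ->
  `|c - c'| < 2 * B / K%:R.
Proof.
move=> hB hK /andP[c0 c1] /andP[c0' c1'] heq.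
have hK' : 0 < (K%:R : R) by rewrite ltr0n.
set hh := 2 * B / K%:R.
have hh0 : 0 < hh by rewrite /hh; apply: divr_gt0 => //; lra.
set x := (c + B) / hh; set x' := (c' + B) / hh.
have hx0 : 0 <= x by rewrite /x divr_ge0 //; lra.
have hx0' : 0 <= x' by rewrite /x' divr_ge0 //; lra.
have hxK : x <= K%:R.
  by rewrite /x ler_pdivrMr // /hh mulrCA mulfV ?lt0r_neq0 // mulr1; lra.
have hxK' : x' <= K%:R.
  by rewrite /x' ler_pdivrMr // /hh mulrCA mulfV ?lt0r_neq0 // mulr1; lra.
have t1 : (Num.truncn x <= K)%N.
  rewrite truncn_le_nat; have : (K%:R : R) < K.+1%:R by rewrite ltr_nat.
  lra.
have t1' : (Num.truncn x' <= K)%N.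
  rewrite truncn_le_nat; have : (K%:R : R) < K.+1%:R by rewrite ltr_nat.
  lra.
have e := congr1 val heq; rewrite /= !inordK ?ltnS // in e.
have := truncn_itv hx0; have := truncn_itv hx0'.
rewrite e -addn1 natrD.
set N := ((Num.truncn x')%:R : R) => /andP[a1 a2] /andP[a3 a4].
have hxx : `|x - x'| < 1 by rewrite ltr_norml; apply/andP; split; lra.
have -> : c - c' = (x - x') * hh.
  by rewrite /x /x' mulrBl !divfK ?lt0r_neq0 //; ring.
by rewrite normrM (gtr0_norm hh0) gtr_pMl.
Qed.

End S5.

Local Open Scope ring_scope.
Local Open Scope complex_scope.
Local Open Scope classical_set_scope.
Set Implicit Arguments. Unset Strict Implicit. Unset Printing Implicit Defensive.

Section S6.
Variable R : realType.
Local Notation C := (R[i]).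
Local Notation normc := (@ComplexField.Normc.normc R).
Implicit Types (z w x y u v lam : C) (g h k : C * C).

Lemma ReB x y : complex.Re (x - y) = complex.Re x - complex.Re y.
Proof. by case: x => a b; case: y => c d. Qed.
Lemma ImB x y : complex.Im (x - y) = complex.Im x - complex.Im y.
Proof. by case: x => a b; case: y => c d. Qed.

Lemma stab_triv (Gam : set (C * C)) g z : fuchsian Gam -> torsion_free Gam ->
  Gam g -> inD z -> mob g z = z -> g = gone R \/ g = gmone R.
Proof.
move=> hF htf hg hz hfix.
have hF' := hF; move: hF' => [hsu [_ [_ [hmul [hinv [eps heps hdisc]]]]]].
set B := Bd z.
have hB1 : 1 <= B := Bd_ge1 hz.
have hB0 : 0 < B by lra.
pose p n := gpow g n.
have pG n : Gam (p n) := gpow_Gam n hF hg.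
have psu n : su11 (p n) := hsu _ (pG n).
have pfix n : mob (p n) z = z := gpow_fix n hF hg hz hfix.
have pb1 n : n2 (p n).1 <= B := stab_bound (psu n) hz (pfix n).
have pb2 n : n2 (p n).2 <= B.
  have := pb1 n; move: (psu n) => /su11E; have := n2_ge0 (p n).2; lra.
have coord (c : R) x : n2 x <= B -> (c = complex.Re x \/ c = complex.Im x) -> -B <= c <= B.
  move=> hx hc.
  have hc2 : c ^+ 2 <= B.
    case: hc => ->; move: hx; rewrite /n2;
      [have := sqr_ge0 (complex.Im x) | have := sqr_ge0 (complex.Re x)]; lra.
  apply/andP; split; nra.
set K := (Num.truncn (32 * B ^+ 3 / eps ^+ 2)).+1.
have hK : (0 < K)%N by [].
have hKr : 32 * B ^+ 3 / eps ^+ 2 < K%:R by apply: truncnS_gt.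
have hK1 : (1 : R) <= K%:R by rewrite ler1n.
set hh := 2 * B / K%:R.
have hhK : hh * K%:R = 2 * B by rewrite /hh divfK // lt0r_neq0 // ltr0n.
have hh0 : 0 < hh by rewrite /hh divr_gt0 // ?ltr0n //; lra.
pose cell (c : R) : 'I_K.+1 := inord (Num.truncn ((c + B) / hh)).
pose f n := (cell (complex.Re (p n).1), cell (complex.Im (p n).1),
             cell (complex.Re (p n).2), cell (complex.Im (p n).2)).
have [i [j [hij hf]]] := pigeon f.
case: hf => e1 e2 e3 e4.
have c1 := cell_close hB0 hK (coord _ _ (pb1 j) (or_introl erefl)) (coord _ _ (pb1 i) (or_introl erefl)) (esym e1).
have c2 := cell_close hB0 hK (coord _ _ (pb1 j) (or_intror erefl)) (coord _ _ (pb1 i) (or_intror erefl)) (esym e2).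
have c3 := cell_close hB0 hK (coord _ _ (pb2 j) (or_introl erefl)) (coord _ _ (pb2 i) (or_introl erefl)) (esym e3).
have c4 := cell_close hB0 hK (coord _ _ (pb2 j) (or_intror erefl)) (coord _ _ (pb2 i) (or_intror erefl)) (esym e4).
rewrite -/hh in c1 c2 c3 c4.
set P := p i; set Q := p j.
have d1 : n2 (Q.1 - P.1) < 2 * hh ^+ 2 by apply: n2_small; rewrite ?ReB ?ImB.
have d2 : n2 (Q.2 - P.2) < 2 * hh ^+ 2 by apply: n2_small; rewrite ?ReB ?ImB.
set q := gmul (ginv P) Q.
have hq : q = p (j - i)%N.
  rewrite /q /Q /p -{1}(subnKC (ltnW hij)) gpow_add gmulA gmulVg ?gmul1g //.
  exact: psu.
have Gq : Gam q by rewrite hq.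
have hsmall : 8 * B * hh ^+ 2 < eps ^+ 2.
  have he2 : 0 < eps ^+ 2 by apply: exprn_gt0.
  have h32 : 32 * B ^+ 3 < eps ^+ 2 * K%:R.
    by move: hKr; rewrite ltr_pdivrMr // => h; nra.
  have hKK : (K%:R : R) <= K%:R * K%:R by nra.
  have : (8 * B * hh ^+ 2) * (K%:R * K%:R) < eps ^+ 2 * (K%:R * K%:R).
    have -> : (8 * B * hh ^+ 2) * (K%:R * K%:R) = 32 * B ^+ 3.
      have -> : 32 * B ^+ 3 = 8 * B * (2 * B) ^+ 2 by ring.
      by rewrite -hhK; ring.
    nra.
  rewrite ltr_pM2r //; nra.
have hPa := pb1 i; have hPb := pb2 i; rewrite -/P in hPa hPb.
have hd1 := n2_ge0 (Q.1 - P.1); have hd2 := n2_ge0 (Q.2 - P.2).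
have b1 : n2 (q.1 - 1) < eps ^+ 2.
  rewrite /q gdiff1; last exact: psu.
  apply: (le_lt_trans (n2B_le _ _)); rewrite !n2M !n2J.
  have := n2_ge0 P.1; have := n2_ge0 P.2; nra.
have b2 : n2 q.2 < eps ^+ 2.
  rewrite /q gdiff2; last exact: psu.
  apply: (le_lt_trans (n2B_le _ _)); rewrite !n2M !n2J.
  have := n2_ge0 P.1; have := n2_ge0 P.2; nra.
have q1 : q = gone R by apply: hdisc => //; apply: normc_lt_eps.
apply: (htf g (j - i)%N hg); first by rewrite subn_gt0.
by left; rewrite -/(p (j - i)%N) -hq q1.
Qed.

End S6.

From mathcomp Require Import finmap.
Local Open Scope ring_scope.
Local Open Scope complex_scope.
Local Open Scope classical_set_scope.
Local Open Scope card_scope.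
Set Implicit Arguments. Unset Strict Implicit. Unset Printing Implicit Defensive.

Lemma card_U1 {T : choiceType} (A : set T) (x : T) n :
  A x -> ((A #= `I_n.+1) <-> (A `\ x #= `I_n)).
Proof.
move=> Ax; split; last by move=> h; apply/eq_cardSP; exists x.
move=> hA.
have fA : finite_set A by apply/finite_setP; exists n.+1.
have fD : finite_set (A `\ x) by apply: finite_setD.
apply/(fcard_eq fD (finite_II n)).
rewrite fset_setD1 // (card_fset_set (card_eqxx `I_n)).
have e := cardfsD1 x (fset_set A).
have hx : x \in fset_set A by rewrite in_fset_set // in_setE.
by move: e; rewrite hx (card_fset_set hA) add1n => -[].
Qed.


Section Main.
Variable R : realType.
Local Notation C := (R[i]).
Implicit Types (z w x y u v lam mu : C) (g h k : C * C).
Variable Gam : set (C * C).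
Hypothesis hF : fuchsian Gam.
Hypothesis htf : torsion_free Gam.

Lemma Gsu g : Gam g -> su11 g.
Proof. by have [h _] := hF; apply: h. Qed.

Lemma Ginv g : Gam g -> Gam (ginv g).
Proof. by have [_ [_ [_ [_ [h _]]]]] := hF; apply: h. Qed.

Lemma Gmul g h : Gam g -> Gam h -> Gam (gmul g h).
Proof. by have [_ [_ [_ [hm _]]]] := hF; apply: hm. Qed.

Lemma idact g : g = gone R \/ g = gmone R -> forall w, mob g w = w.
Proof. by case=> -> w; [rewrite mob1 | rewrite mobm1]. Qed.

Lemma stabG g z : Gam g -> inD z -> mob g z = z -> forall w, mob g w = w.
Proof. move=> hg hz hf; apply: idact; exact: (stab_triv hF htf hg hz hf). Qed.

Lemma lamD lam : Lambda Gam lam -> inD lam.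
Proof. by case=> g hg <-; apply: mob_inD; [exact: Gsu | exact: inD0]. Qed.

Definition hof lam : C * C := xget (gone R) [set g | Gam g /\ mob g 0 = lam].

Lemma hofP lam : Lambda Gam lam -> Gam (hof lam) /\ mob (hof lam) 0 = lam.
Proof.
case=> g hg e; rewrite /hof.
by apply: (xgetPex (gone R) (P := [set g | Gam g /\ mob g 0 = lam])); exists g.
Qed.

Definition fz z lam := mob (ginv (hof lam)) z.

Section Fixz.
Variable z : C.
Hypothesis hz : inD z.

Lemma fz_in lam : upsilon_set Gam z lam -> (focal_set Gam z `\ z) (fz z lam).
Proof.
move=> [hl [hl0 [_ hL]]].
have [hh e] := hofP hl; set h := hof lam in hh e *.
have hsu := Gsu hh; have hsi := su11_ginv hsu.
have hz' : inD (fz z lam) by apply: mob_inD.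
split; last first.
  rewrite /= => hfix.
  have := stabG (Ginv hh) hz hfix => hid.
  apply: hl0; rewrite -e.
  have := hid (mob h 0); rewrite mob_ginvK //; last exact: inD0.
split; first exact: hz'.
split; first by exists (ginv h) => //; apply: Ginv.
rewrite -(hdist_mob hsu (@inD0 R) hz') /fz -/h mob_Kginv // e.
rewrite hdist_sym -hL hdist_sym //.
Qed.

Lemma fz_inj : {in upsilon_set Gam z &, injective (fz z)}.
Proof.
move=> lam mu; rewrite !in_setE => -[hl _] [hm _] heq.
have [hh eh] := hofP hl; have [hk ek] := hofP hm.
set h := hof lam in hh eh heq *; set k := hof mu in hk ek heq *.
have sh := Gsu hh; have sk := Gsu hk.
have hfix : mob (gmul k (ginv h)) z = z.
  rewrite (mob_comp sk (su11_ginv sh) hz).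
  move: heq; rewrite /fz -/h -/k => ->.
  by rewrite mob_Kginv.
have hid := stabG (Gmul hk (Ginv hh)) hz hfix.
rewrite -ek -eh.
have h0 : inD (mob h 0) by apply: mob_inD => //; exact: inD0.
have := hid (mob h 0); rewrite (mob_comp sk (su11_ginv sh) h0) mob_ginvK //.
exact: inD0.
Qed.

Lemma fz_surj z' : (focal_set Gam z `\ z) z' -> exists2 lam, upsilon_set Gam z lam & fz z lam = z'.
Proof.
move=> [[hz' [[g hg ez] hd]] hne].
have sg := Gsu hg.
set lam := mob (ginv g) 0.
have hlL : Lambda Gam lam by exists (ginv g) => //; apply: Ginv.
have hlD : inD lam by apply: lamD.
have hl0 : lam <> 0.
  move=> h0; apply: hne.
  have hid := stabG (Ginv hg) (@inD0 R) h0.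
  have := mob_Kginv sg hz; rewrite hid => h1.
  by rewrite /= -ez.
exists lam.
  split => //; split => //; split => //.
  rewrite -(hdist_mob sg hz hlD) /lam (mob_Kginv sg (@inD0 R)) ez.
  by rewrite hdist_sym -hd hdist_sym.
have [hh eh] := hofP hlL; set h := hof lam in hh eh *.
have sh := Gsu hh.
have hfix : mob (gmul g h) 0 = 0.
  by rewrite (mob_comp sg sh (@inD0 R)) eh /lam (mob_Kginv sg (@inD0 R)).
have hid := stabG (Gmul hg hh) (@inD0 R) hfix.
rewrite /fz -/h -ez.
have w0 : inD (mob (ginv h) z) := mob_inD (su11_ginv sh) hz.
by rewrite -{2}(mob_Kginv sh hz) -(mob_comp sg sh w0) hid.
Qed.

Lemma focal_eq : focal_set Gam z `\ z = fz z @` upsilon_set Gam z.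
Proof.
apply/seteqP; split => x.
  by move=> /fz_surj [lam hl <-]; exists lam.
by move=> [lam hl <-]; apply: fz_in.
Qed.

Lemma focal_z : focal_set Gam z z.
Proof. split => //; split => //; exists (gone R); [by have [_ [h _]] := hF | exact: mob1]. Qed.

Lemma part1_card n : (focal_set Gam z #= `I_n.+1) <-> (upsilon_set Gam z #= `I_n).
Proof.
rewrite (card_U1 n focal_z) focal_eq.
have e : fz z @` upsilon_set Gam z #= upsilon_set Gam z by apply: inj_card_eq; exact: fz_inj.
split => h.
  by apply: card_eq_trans (card_esym e) h.
by apply: card_eq_trans e h.
Qed.

End Fixz.

End Main.

End H.
Import H.
Unset Implicit Arguments.

Theorem lemma1 (R : realType) (Gam : set (R[i] * R[i])) :
  fuchsian Gam -> torsion_free Gam -> cocompact Gam ->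
  [/\ (forall i : nat, (1 <= i)%N ->
         sigma Gam i = [set z | inD z /\ card_eq (upsilon_set Gam z) `I_(i - 1)]),
      [set z | inD z] = sigma Gam 1 `|` web Gam &
      (forall z, inD z ->
         card_eq (iota_set Gam z) [set lam | Lambda Gam lam /\ hdist z lam < hdist 0 z])].
Proof.
move=> hF htf _.
have P1 : forall i : nat, (1 <= i)%N ->
         sigma Gam i = [set z | inD z /\ card_eq (upsilon_set Gam z) `I_(i - 1)].
  move=> [//|n] _; rewrite subn1 /=.
  apply/seteqP; split => z [hz h]; split => //.
    by apply/(part1_card hF htf hz).
  by apply/(part1_card hF htf hz).
split => //.
  apply/seteqP; split => z; last first.
    by case => [[hz _]|[lam [_ [_ [hz _]]]]].
  move=> hz.
  have [[lam [hl [hl0 hL]]]|hno] := pselect (exists lam, upsilon_set Gam z lam).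
    by right; exists lam.
  left; rewrite (P1 1%N) // subnn; split => //.
  have -> : upsilon_set Gam z = set0.
    by apply/seteqP; split => x // hx; exfalso; apply: hno; exists x.
  rewrite II0; exact: card_eq00.
move=> z hz.
have -> : iota_set Gam z = [set lam | Lambda Gam lam /\ hdist z lam < hdist 0 z].
  apply/seteqP; split => lam.
    move=> [hl [hl0 hne]]; split => //.
    by apply/(part3_geo hz (lamD hF hl)).
  move=> [hl hlt]; have [hl0 hne] := (part3_geo hz (lamD hF hl)).2 hlt.
  by split.
exact: card_eqxx.
Qed.
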